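(* Let $\mathcal{N}=((V,A),\varphi)$ be a rooted $X$-cactus. Then $\mathcal{N}$ is temporal if and only if for every vertex $u\in V$ the following three properties hold: (a) if $u\in\varphi(X)$, then either $u$ is a leaf or $u$ is a parent of a reticulation vertex that is a leaf; (b) if $u$ has outdegree at least $2$, then $u$ is not the parent of a reticulation vertex that is a leaf; (c) if $u$ is the parent of a reticulation vertex $v$ in a reticulation cycle $\{P,P'\}$, then neither of the directed paths $P,P'$ consists of the single arc $(u,v)$.
   Context: Let $X$ be a finite non-empty set. A directed graph $N=(V,A)$ has a finite non-empty vertex set $V$ and arc set $A\subseteq V\times V$. It is a rooted DAG if it has no directed cycle and has a vertex $\rho$ of indegree $0$ (the root) such that every vertex is reachable from $\rho$ by a directed path. A leaf is a vertex of outdegree $0$, an internal vertex has outdegree $\ge 1$, a tree vertex has indegree $\le 1$, and a reticulation vertex has indegree $\ge 2$. If $(u,v)\in A$, then $v$ is a child of $u$ and $u$ is a parent of $v$. A reticulation cycle $\{P,P'\}$ consists of two distinct directed paths $P,P'$ with the same start vertex and the same end vertex but no other vertices in common. A rooted $X$-cactus $\mathcal{N}=(N,\varphi)$ is a rooted DAG $N=(V,A)$ together with a map $\varphi:X\to V$ such that (RC1) every vertex has indegree at most $2$; (RC2) no two distinct reticulation cycles have an arc in common; (RC3) $\varphi(X)$ contains all leaves and all tree vertices of outdegree $1$. A time-stamp function on $\mathcal{N}$ is a map $t:V\to\mathbb{R}_{\ge 0}$ with (TS1) $t(v)=0$ for all $v\in\varphi(X)$; (TS2) $t(u)>t(v)$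 for every arc $(u,v)$ such that $v$ is not a reticulation vertex; (TS3) $t(v)=t(p_1)=t(p_2)$ for every reticulation vertex $v$ with parents $p_1,p_2$. $\mathcal{N}$ is called temporal if a time-stamp function on its vertices exists. *)

(* Defs.v *)
From mathcomp Require Import all_boot.
From Stdlib Require Import Reals.
Set Implicit Arguments. Unset Strict Implicit. Unset Printing Implicit Defensive.

Section Cactus.
Variables (V : finType) (A : rel V).

Definition indeg (v : V) : nat := #|[set u | A u v]|.
Definition outdeg (u : V) : nat := #|[set w | A u w]|.
Definition is_leaf (v : V) : Prop := outdeg v = 0.
Definition is_tree_vertex (v : V) : Prop := indeg v <= 1.
Definition is_reticulation (v : V) : Prop := 2 <= indeg v.

Definition is_dpath (s : seq V) : bool :=
  if s is x :: p then (p != [::]) && path A x p && uniq s else false.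

Definition path_arcs (s : seq V) : seq (V * V) := zip s (behead s).

Definition acyclic : Prop :=
  forall (x : V) (p : seq V), p != [::] -> path A x p -> last x p <> x.

Definition rooted_DAG : Prop :=
  acyclic /\ exists rho : V, indeg rho = 0 /\ forall v : V, connect A rho v.

Definition ret_cycle (P Q : seq V) : Prop :=
  [/\ is_dpath P, is_dpath Q, P <> Q &
   exists s t : V,
     [/\ head t P = s, head t Q = s, last s P = t, last s Q = t &
      forall w, w \in P -> w \in Q -> w = s \/ w = t]].

Definition rooted_cactus (X : finType) (phi : X -> V) : Prop :=
  [/\ 0 < #|X|,
      rooted_DAG,
      forall v, indeg v <= 2,
      (forall P P' Q Q', ret_cycle P P' -> ret_cycle Q Q' ->
                  (exists e, e \in path_arcs P ++ path_arcs P' /\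
                             e \in path_arcs Q ++ path_arcs Q') ->
                  (P = Q /\ P' = Q') \/ (P = Q' /\ P' = Q)) &
      forall v, (is_leaf v \/ (is_tree_vertex v /\ outdeg v = 1)) ->
                  exists x, phi x = v].

Definition time_stamp (X : finType) (phi : X -> V) (t : V -> R) : Prop :=
  (forall v, (0 <= t v)%R) /\
  (forall x, t (phi x) = 0%R) /\
  (forall u v, A u v -> ~ is_reticulation v -> (t u > t v)%R) /\
  (forall u v, A u v -> is_reticulation v -> t u = t v).

Definition temporal (X : finType) (phi : X -> V) : Prop :=
  exists t : V -> R, time_stamp phi t.

Definition parent_of_leaf_reticulation (u : V) : Prop :=
  exists v, A u v /\ is_reticulation v /\ is_leaf v.

Definition cond_a (X : finType) (phi : X -> V) (u : V) : Prop :=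
  (exists x, phi x = u) -> is_leaf u \/ parent_of_leaf_reticulation u.

Definition cond_b (u : V) : Prop :=
  2 <= outdeg u -> ~ parent_of_leaf_reticulation u.

Definition cond_c (u : V) : Prop :=
  forall v P P', A u v -> is_reticulation v -> ret_cycle P P' ->
    (v \in P \/ v \in P') -> P <> [:: u; v] /\ P' <> [:: u; v].

End Cactus.

(* Main.v *)
Require Import Defs.
From mathcomp Require Import all_boot.
From Stdlib Require Import Reals Lra.
Set Implicit Arguments. Unset Strict Implicit. Unset Printing Implicit Defensive.


Section Seqs.
Variable T : eqType.

Lemma arcs_mem (x : T) p a b : (a, b) \in zip (x :: p) p -> a \in x :: p /\ b \in p.
Proof.
elim: p x => [//|y p IH] x /=; rewrite in_cons => /orP [/eqP [-> ->]|/IH [H1 H2]].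
  by rewrite !in_cons !eqxx.
by split; rewrite in_cons; apply/orP; right.
Qed.

Lemma arcs_cat (x : T) a b :
  zip (x :: (a ++ b)) (a ++ b) = zip (x :: a) a ++ zip (last x a :: b) b.
Proof. by elim: a x => [//|y a IH] x /=; rewrite IH. Qed.

Lemma arcs_rcons (x : T) a y :
  zip (x :: rcons a y) (rcons a y) = rcons (zip (x :: a) a) (last x a, y).
Proof. by rewrite -cats1 arcs_cat cats1. Qed.

Lemma arcs_pred (x : T) p z : z \in p -> exists y, (y, z) \in zip (x :: p) p.
Proof.
elim: p x => [//|w p IH] x; rewrite in_cons => /orP [/eqP ->|/(IH w) [y Hy]].
  by exists x; rewrite /= in_cons eqxx.
by exists y; rewrite /= in_cons; apply/orP; right.
Qed.

Lemma arcs_uniq (x : T) p a b c : uniq (x :: p) ->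
  (a, b) \in zip (x :: p) p -> (a, c) \in zip (x :: p) p -> b = c.
Proof.
elim: p x => [//|y p IH] x /= /andP [Hx Hu].
rewrite !in_cons => /orP [/eqP [E1 E2]|H1] /orP [/eqP [E3 E4]|H2].
- by rewrite E2 E4.
- subst; move: (arcs_mem H2) => [H _]; by rewrite H in Hx.
- subst; move: (arcs_mem H1) => [H _]; by rewrite H in Hx.
- exact: IH Hu H1 H2.
Qed.

Lemma arcs_sub_suffix (u1 : seq T) u u2 e :
  e \in zip (u :: u2) u2 -> e \in zip (u1 ++ u :: u2) (behead (u1 ++ u :: u2)).
Proof.
elim: u1 => [//|w u1 IH] /= H.
case: u1 IH => [|w' u1'] /= IH; rewrite in_cons; apply/orP; right; exact: IH.
Qed.

Lemma split_last (x : T) s : x \in s -> exists s1 s2, s = s1 ++ x :: s2 /\ x \notin s2.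
Proof.
elim: s => [//|y s IH]; rewrite in_cons.
case Hs: (x \in s) => H.
  have [s1 [s2 [E N]]] := IH Hs.
  by exists (y :: s1), s2; rewrite E.
rewrite orbF in H; move/eqP: H => E; subst y; exists [::], s; split => //; by rewrite Hs.
Qed.

End Seqs.

Section Graph.
Variables (V : finType) (A : rel V).
Hypothesis acyc : acyclic A.

Lemma noloop x y : connect A x y -> A y x -> False.
Proof.
move=> /connectP [p Hp ->] H.
apply: (acyc (x := x) (p := rcons p x)); first by case: p {Hp H}.
  by rewrite rcons_path Hp H.
by rewrite last_rcons.
Qed.

Lemma noself x : ~ A x x.
Proof. by move=> H; apply: (noloop (connect0 _ x) H). Qed.

Lemma suffix_connect x p w : path A x p -> w \in x :: p -> connect A w (last x p).
Proof.
elim: p x w => [|y p IH] x w /=.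
  by rewrite inE => _ /eqP ->; apply: connect0.
move=> /andP [Hxy Hp]; rewrite in_cons => /orP [/eqP ->|Hw].
  apply: connect_trans (connect1 Hxy) _; exact: (IH y y Hp (mem_head _ _)).
exact: IH.
Qed.

Lemma arcs_A x p a b : path A x p -> (a, b) \in zip (x :: p) p -> A a b.
Proof.
elim: p x => [//|y p IH] x /= /andP [Hxy Hp]; rewrite in_cons => /orP [/eqP [-> ->]//|H].
exact: IH Hp H.
Qed.

Definition desc c := [set w | connect A c w].

Lemma desc_lt x z y : A x z -> connect A z y -> #|desc y| < #|desc x|.
Proof.
move=> Hxz Hzy; apply: proper_card; apply/properP; split.
  apply/subsetP => w; rewrite !inE => Hyw.
  exact: connect_trans (connect_trans (connect1 Hxz) Hzy) Hyw.
exists x; rewrite !inE ?connect0 //; apply/negP => Hyx.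
exact: noloop (connect_trans Hzy Hyx) Hxz.
Qed.

Lemma ret_two a b v : a != b -> A a v -> A b v -> is_reticulation A v.
Proof.
move=> Hab Ha Hb; rewrite /is_reticulation /indeg.
have <- : #|[set a; b]| = 2 by rewrite cards2 Hab.
apply: subset_leq_card; apply/subsetP => w; rewrite !inE => /orP [] /eqP -> //.
Qed.

Lemma two_ret a v : is_reticulation A v -> A a v -> exists b, b != a /\ A b v.
Proof.
move=> Hr Ha; rewrite /is_reticulation /indeg in Hr.
have : 0 < #|[set u | A u v] :\ a|.
  by move: Hr; rewrite (cardsD1 a) inE Ha.
case/card_gt0P => b; rewrite !inE => /andP [H1 H2]; by exists b.
Qed.

Lemma three_par v a b x : indeg A v <= 2 -> a != b -> A a v -> A b v -> A x v ->
  x = a \/ x = b.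
Proof.
move=> Hd Hab Ha Hb Hx.
case: (eqVneq x a) => [->|Hxa]; first by left.
case: (eqVneq x b) => [->|Hxb]; first by right.
have : #|[set x; a; b]| <= indeg A v.
  apply: subset_leq_card; apply/subsetP => w; rewrite !inE => /orP [/orP []|] /eqP -> //.
rewrite /indeg in Hd *.
rewrite -setUA cardsU1 cards2 Hab !inE negb_or Hxa Hxb /= => H.
by have := leq_trans H Hd.
Qed.

Lemma out_two u a b : a != b -> A u a -> A u b -> 2 <= outdeg A u.
Proof.
move=> Hab Ha Hb; rewrite /outdeg.
have <- : #|[set a; b]| = 2 by rewrite cards2 Hab.
apply: subset_leq_card; apply/subsetP => w; rewrite !inE => /orP [] /eqP -> //.
Qed.

Lemma two_out u v : 2 <= outdeg A u -> A u v -> exists w, w != v /\ A u w.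
Proof.
move=> Hr Ha; rewrite /outdeg in Hr.
have : 0 < #|[set w | A u w] :\ v|.
  by move: Hr; rewrite (cardsD1 v) inE Ha.
case/card_gt0P => b; rewrite !inE => /andP [H1 H2]; by exists b.
Qed.

Lemma out_pos u : outdeg A u <> 0 -> exists w, A u w.
Proof.
rewrite /outdeg => H; have : 0 < #|[set w | A u w]| by case: #|_| H.
by case/card_gt0P => w; rewrite inE; exists w.
Qed.

Lemma leaf_no u w : is_leaf A u -> ~ A u w.
Proof.
rewrite /is_leaf /outdeg => H Hw.
have : 0 < #|[set w | A u w]| by apply/card_gt0P; exists w; rewrite inE.
by rewrite H.
Qed.

End Graph.

Section Cyc.
Variables (V : finType) (A : rel V).
Hypothesis acyc : acyclic A.
Hypothesis root : exists rho, forall v, connect A rho v.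
Hypothesis RC2 : forall P P' Q Q', ret_cycle A P P' -> ret_cycle A Q Q' ->
  (exists e, e \in path_arcs P ++ path_arcs P' /\ e \in path_arcs Q ++ path_arcs Q') ->
  (P = Q /\ P' = Q') \/ (P = Q' /\ P' = Q).

Lemma cyc_unfold P Q : ret_cycle A P Q -> exists s p q,
  [/\ P = s :: p, Q = s :: q, p != [::], q != [::] &
  [/\ path A s p, path A s q, uniq P, uniq Q &
  [/\ last s p = last s q, P <> Q &
     forall w, w \in P -> w \in Q -> w = s \/ w = last s p]]].
Proof.
case=> HP HQ HPQ [s [t [E1 E2 E3 E4 Hw]]].
case: P HP HPQ E1 E3 Hw => [//|s1 p] /= /andP [/andP [Hp Hpp] Hu] HPQ E1 E3 Hw.
case: Q HQ HPQ E2 E4 Hw => [//|s2 q] /= /andP [/andP [Hq Hqp] Hu'] HPQ E2 E4 Hw.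
subst s1 s2; exists s, p, q; split => //; split => //; split => //.
  by rewrite E3 E4.
by move=> w H1 H2; rewrite E3; apply: Hw.
Qed.

Lemma dpath_rcons s ps v : path A s ps -> uniq (s :: ps) -> A (last s ps) v ->
  v \notin s :: ps -> is_dpath A (s :: rcons ps v).
Proof.
move=> Hp Hu Hl Hv; rewrite /is_dpath rcons_path Hp Hl -rcons_cons rcons_uniq Hv Hu.
by case: ps {Hp Hu Hl Hv}.
Qed.

Lemma cyc_exists a v : is_reticulation A v -> A a v -> exists b s ps qs,
  [/\ a != b, A b v, last s ps = a, last s qs = b &
      ret_cycle A (s :: rcons ps v) (s :: rcons qs v)].
Proof.
move=> Hr Ha; have [b [Hba Hb]] := two_ret Hr Ha.
have [rho Hrho] := root.
pose common c := connect A c a && connect A c b.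
have Hc : common rho by rewrite /common !Hrho.
have [s /andP [Hsa Hsb] Hmin] := arg_minnP (fun c => #|desc A c|) Hc.
case/connectP: Hsa => p0 Hp0 Ea; case: (shortenP Hp0) Ea => ps Hps Hups _ Ea.
case/connectP: Hsb => q0 Hq0 Eb; case: (shortenP Hq0) Eb => qs Hqs Huqs _ Eb.
have Ea' := esym Ea; have Eb' := esym Eb; clear Ea Eb.
have Hdis : forall w, w \in ps -> w \in qs -> False.
  move=> w Hw1 Hw2.
  have H1 : connect A w a by rewrite -Ea'; apply: suffix_connect; rewrite // in_cons Hw1 orbT.
  have H2 : connect A w b by rewrite -Eb'; apply: suffix_connect; rewrite // in_cons Hw2 orbT.
  have := Hmin w; rewrite /common H1 H2 => /(_ is_true_true).
  case: ps Hps Hups Ea' Hw1 {H1} => [//|z ps'] /= /andP [Hsz Hps'] _ _ Hw1.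
  have Hzw : connect A z w by apply: (path_connect Hps').
  by rewrite leqNgt (desc_lt acyc Hsz Hzw).
have Hvp : v \notin s :: ps.
  apply/negP => H; apply: (noloop acyc _ Ha); rewrite -Ea'; exact: suffix_connect.
have Hvq : v \notin s :: qs.
  apply/negP => H; apply: (noloop acyc _ Hb); rewrite -Eb'; exact: suffix_connect.
exists b, s, ps, qs; split => //; first by rewrite eq_sym.
split.
- by apply: dpath_rcons => //; rewrite Ea'.
- by apply: dpath_rcons => //; rewrite Eb'.
- move=> [] E; have E2 : ps = qs by apply: (rcons_injl v).
  move: Hba; by rewrite -Ea' -Eb' E2 eqxx.
- exists s, v; split => //; try by rewrite /= last_rcons.
  move=> w; rewrite !in_cons !mem_rcons !in_cons.
  case/orP => [/eqP ->|/orP [/eqP ->|H1]]; first by left.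
    by right.
  case/orP => [/eqP ->|/orP [/eqP ->|H2]]; first by left.
    by right.
  by case: (Hdis w H1 H2).
Qed.


Lemma sameEnd P P' Q Q' e : ret_cycle A P P' -> ret_cycle A Q Q' ->
  e \in path_arcs P ++ path_arcs P' -> e \in path_arcs Q ++ path_arcs Q' ->
  forall s p s' q, P = s :: p -> Q = s' :: q -> last s p = last s' q.
Proof.
move=> H1 H2 He1 He2 s p s' q EP EQ.
case: (RC2 H1 H2 (ex_intro _ e (conj He1 He2))) => [[E1 E2]|[E1 E2]].
  by move: EQ; rewrite -E1 EP => [[-> ->]].
have [s2 [q2 [q2' [EQ2 EQ2' _ _ [_ _ _ _ [El _ _]]]]]] := cyc_unfold H2.
move: EQ EP; rewrite EQ2 E1 EQ2' => [[<- <-]] [<- <-]; by rewrite El.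
Qed.

Lemma ret_end P Q s p x y : ret_cycle A P Q -> P = s :: p ->
  (x, y) \in path_arcs P ++ path_arcs Q -> is_reticulation A y -> y = last s p.
Proof.
move=> H EP He Hr.
have [s2 [p2 [q2 [EP2 EQ2 _ _ [Hp2 Hq2 _ _ _]]]]] := cyc_unfold H.
have Axy : A x y.
  move: He; rewrite mem_cat EP2 EQ2 /path_arcs /= => /orP [] He.
    exact: arcs_A Hp2 He.
  exact: arcs_A Hq2 He.
have [b [s' [ps [qs [_ _ Ex _ HD]]]]] := cyc_exists Hr Axy.
have He' : (x, y) \in path_arcs (s' :: rcons ps y) ++ path_arcs (s' :: rcons qs y).
  by rewrite mem_cat /path_arcs /= arcs_rcons mem_rcons in_cons Ex eqxx.
by rewrite (sameEnd H HD He He' EP (erefl _)) last_rcons.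
Qed.

Lemma entry P Q s p q z w : ret_cycle A P Q -> P = s :: p -> Q = s :: q ->
  (z \in P) || (z \in Q) -> z != s -> A w z ->
  (w, z) \notin path_arcs P ++ path_arcs Q -> z = last s p.
Proof.
move=> H EP EQ Hz Hzs Hwz Hn.
have [s2 [p2 [q2 [EP2 EQ2 _ _ [Hp2 Hq2 _ _ _]]]]] := cyc_unfold H.
move: EP2 EQ2; rewrite EP EQ => [[E1 E2]] [_ E3]; subst s2 p2 q2.
have Hz' : (z \in p) || (z \in q).
  by move: Hz; rewrite EP EQ !in_cons (negbTE Hzs).
case/orP: Hz' => Hz'.
  have [y Hy] := arcs_pred s Hz'.
  have Hyz := arcs_A Hp2 Hy.
  have Hyw : y != w by apply/eqP => E; subst y; move: Hn; rewrite mem_cat EP /path_arcs /= Hy.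
  apply: (ret_end H EP (x := y)); first by rewrite mem_cat EP /path_arcs /= Hy.
  exact: ret_two Hyw Hyz Hwz.
have [y Hy] := arcs_pred s Hz'.
have Hyz := arcs_A Hq2 Hy.
have Hyw : y != w by apply/eqP => E; subst y; move: Hn; rewrite mem_cat EQ /path_arcs /= Hy orbT.
apply: (ret_end H EP (x := y)); first by rewrite mem_cat EQ /path_arcs /= Hy orbT.
exact: ret_two Hyw Hyz Hwz.
Qed.

Lemma walk_in P Q s p q : ret_cycle A P Q -> P = s :: p -> Q = s :: q ->
  forall x0 xs, path A x0 xs -> (last x0 xs \in P) || (last x0 xs \in Q) ->
  last s p \notin x0 :: xs -> s \notin xs ->
  ((x0 \in P) || (x0 \in Q)) /\ (forall e, e \in zip (x0 :: xs) xs -> e \in path_arcs P ++ path_arcs Q).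
Proof.
move=> H EP EQ x0 xs; elim: xs x0 => [|x1 xs IH] x0 /=.
  by move=> _ Hl _ _; split.
move=> /andP [H01 Hp] Hl Ht Hs.
have Ht' : last s p \notin x1 :: xs by move: Ht; rewrite in_cons negb_or => /andP [_].
have Hs' : s \notin xs by move: Hs; rewrite in_cons negb_or => /andP [_].
have [Hx1 Harcs] := IH x1 Hp Hl Ht' Hs'.
have Hin : (x0, x1) \in path_arcs P ++ path_arcs Q.
  apply/negPn/negP => Hn.
  have Hx1s : x1 != s by move: Hs; rewrite in_cons negb_or eq_sym => /andP [].
  have := entry H EP EQ Hx1 Hx1s H01 Hn => E.
  by move: Ht; rewrite E !in_cons eqxx orbT.
split.
  move: Hin; rewrite mem_cat EP EQ /path_arcs /= => /orP [] /arcs_mem [Hm _];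
  by rewrite Hm ?orbT.
move=> e; rewrite in_cons => /orP [/eqP ->//|]; exact: Harcs.
Qed.

End Cyc.

Section Core.
Variables (V : finType) (A : rel V).
Hypothesis acyc : acyclic A.
Hypothesis root : exists rho, forall v, connect A rho v.
Hypothesis RC2 : forall P P' Q Q', ret_cycle A P P' -> ret_cycle A Q Q' ->
  (exists e, e \in path_arcs P ++ path_arcs P' /\ e \in path_arcs Q ++ path_arcs Q') ->
  (P = Q /\ P' = Q') \/ (P = Q' /\ P' = Q).
Definition NoShort := forall P Q u w, ret_cycle A P Q -> P <> [:: u; w].
Hypothesis NS : NoShort.

Lemma ret_cycle_sym P Q : ret_cycle A P Q -> ret_cycle A Q P.
Proof.
case=> H1 H2 H3 [s [t [E1 E2 E3 E4 H]]]; split => //.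
  by move=> E; apply: H3.
exists s, t; split => // w Hw1 Hw2; exact: H.
Qed.

Lemma prearc a v : is_reticulation A v -> A a v -> exists y s p Q,
  [/\ ret_cycle A (s :: p) Q, last s p = v, A y a &
      (y, a) \in path_arcs (s :: p) ++ path_arcs Q].
Proof.
move=> Hr Ha; have [b [s [ps [qs [_ _ Eps _ HC]]]]] := cyc_exists acyc root Hr Ha.
case/lastP: ps Eps HC => [|ps' a'] Eps HC.
  by rewrite /= in Eps; subst s; case: (NS HC (erefl [:: a; v])).
rewrite last_rcons in Eps; subst a'.
have He : (last s ps', a) \in path_arcs (s :: rcons (rcons ps' a) v) ++ path_arcs (s :: rcons qs v).
  by rewrite mem_cat /path_arcs /= !arcs_rcons !mem_rcons !in_cons !mem_rcons !in_cons eqxx !orbT.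
exists (last s ps'), s, (rcons (rcons ps' a) v), (s :: rcons qs v); split => //.
  by rewrite last_rcons.
have [s2 [p2 [q2 [EP2 EQ2 _ _ [Hp2 Hq2 _ _ _]]]]] := cyc_unfold HC.
case: EP2 => E1 E2; subst s2 p2.
apply: (arcs_A Hp2 (x := s)); by rewrite !arcs_rcons !mem_rcons !in_cons !mem_rcons !in_cons eqxx !orbT.
Qed.

Lemma ret_ret a b : A a b -> is_reticulation A a -> is_reticulation A b -> False.
Proof.
move=> Hab Ha Hb; have [y [s [p [Q [HC Ep _ He]]]]] := prearc Hb Hab.
have := ret_end acyc root RC2 HC (erefl _) He Ha; rewrite Ep => E; subst b.
rewrite -E in Hab; exact: noself acyc _ Hab.
Qed.

Lemma tree_one u v w : ~ is_reticulation A u -> A u v -> A u w ->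
  is_reticulation A v -> is_reticulation A w -> v = w.
Proof.
move=> Hu Hv Hw Rv Rw.
have [y1 [s1 [p1 [Q1 [HC1 E1 Hy1 He1]]]]] := prearc Rv Hv.
have [y2 [s2 [p2 [Q2 [HC2 E2 Hy2 He2]]]]] := prearc Rw Hw.
case: (eqVneq y1 y2) => [E|N]; last by case: Hu; exact: ret_two N Hy1 Hy2.
subst y2; have := sameEnd RC2 HC1 HC2 He1 He2 (erefl _) (erefl _); by rewrite E1 E2.
Qed.

Hypothesis RC1 : forall v, indeg A v <= 2.

Lemma mem_sub_rcons (x s v : V) l : x \in s :: l -> x \in s :: rcons l v.
Proof. by move=> H; rewrite -rcons_cons mem_rcons in_cons H orbT. Qed.

Lemma canon v : is_reticulation A v -> exists s p q,
  let C := path_arcs (s :: p) ++ path_arcs (s :: q) in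
  [/\ ret_cycle A (s :: p) (s :: q), last s p = v,
   (forall x, (x = v) \/ A x v -> exists r, [/\ r != [::], path A s r, last s r = x &
       forall e, e \in zip (s :: r) r -> e \in C]),
   (forall x, A x v -> (x \in s :: p) || (x \in s :: q)) &
   [/\ (forall x c, A x v -> (x, c) \in C -> c = v) & (forall c, (v, c) \notin C)]].
Proof.
move=> Hr.
have [a Ha] : exists a, A a v.
  have : 0 < indeg A v by apply: leq_trans Hr.
  by case/card_gt0P => a; rewrite inE; exists a.
have [b [s [ps [qs [Hab Hb Ea Eb HC]]]]] := cyc_exists acyc root Hr Ha.
have Hps : ps != [::] by apply/negP => /eqP E; subst ps; exact: (NS HC (erefl [:: s; v])).
have Hqs : qs != [::] by apply/negP => /eqP E; subst qs; exact: (NS (ret_cycle_sym HC) (erefl [:: s; v])).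
have [s2 [p2 [q2 [EP2 EQ2 _ _ [Hp2 Hq2 Hu2 Hu3 [_ _ Hw2]]]]]] := cyc_unfold HC.
case: EP2 => E1 E2; case: EQ2 => _ E3; subst s2 p2 q2.
move: Hp2 Hq2; rewrite !rcons_path => /andP [Hp Hpa] /andP [Hq Hqb].
have Hpar : forall x, A x v -> x = a \/ x = b by move=> x Hx; exact: three_par (RC1 v) Hab Ha Hb Hx.
exists s, (rcons ps v), (rcons qs v); split.
- exact: HC.
- by rewrite last_rcons.
- move=> x [->|/Hpar [->|->]].
  + exists (rcons ps v); split => //; first by case: (ps).
      by rewrite rcons_path Hp Hpa.
      by rewrite last_rcons.
    by move=> e He; rewrite mem_cat /path_arcs /= He.
  + exists ps; split => // e He; rewrite mem_cat /path_arcs /= !arcs_rcons !mem_rcons !in_cons He.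
    by rewrite orbT.
  + exists qs; split => // e He; rewrite mem_cat /path_arcs /= !arcs_rcons !mem_rcons !in_cons He.
    by rewrite !orbT.
- move=> x /Hpar [->|->].
    by apply/orP; left; apply: mem_sub_rcons; rewrite -Ea mem_last.
  by apply/orP; right; apply: mem_sub_rcons; rewrite -Eb mem_last.
- split.
  + move=> x c /Hpar [->|->] He.
    * have HaP : a \in s :: rcons ps v by apply: mem_sub_rcons; rewrite -Ea mem_last.
      move: He; rewrite mem_cat => /orP [] He.
        have Hav : (a, v) \in path_arcs (s :: rcons ps v).
          by rewrite /path_arcs /= arcs_rcons mem_rcons in_cons Ea eqxx.
        by rewrite (arcs_uniq Hu2 Hav He).
      have HaQ := (arcs_mem He).1.
      case: (Hw2 a HaP HaQ) => E.
        by exfalso; apply: (acyc (x := s) (p := ps)) => //; rewrite Ea.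
      by move: Ha; rewrite E last_rcons => /(noself acyc).
    * have HbQ : b \in s :: rcons qs v by apply: mem_sub_rcons; rewrite -Eb mem_last.
      move: He; rewrite mem_cat => /orP [] He; last first.
        have Hbv : (b, v) \in path_arcs (s :: rcons qs v).
          by rewrite /path_arcs /= arcs_rcons mem_rcons in_cons Eb eqxx.
        by rewrite (arcs_uniq Hu3 Hbv He).
      have HbP := (arcs_mem He).1.
      case: (Hw2 b HbP HbQ) => E.
        by exfalso; apply: (acyc (x := s) (p := qs)) => //; rewrite Eb.
      by move: Hb; rewrite E last_rcons => /(noself acyc).
  + move=> c; apply/negP => He.
    have [Hvc Hc] : A v c /\ ((c \in rcons ps v) || (c \in rcons qs v)).
      move: He; rewrite mem_cat /path_arcs /= => /orP [] He.
        split; first by apply: (arcs_A _ He); rewrite rcons_path Hp Hpa.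
        by rewrite (arcs_mem He).2.
      split; first by apply: (arcs_A _ He); rewrite rcons_path Hq Hqb.
      by rewrite (arcs_mem He).2 orbT.
    have Hcv : connect A c v.
      case/orP: Hc => Hc.
        have := @suffix_connect V A s (rcons ps v) c; rewrite last_rcons; apply.
          by rewrite rcons_path Hp Hpa.
        by rewrite in_cons Hc orbT.
      have := @suffix_connect V A s (rcons qs v) c; rewrite last_rcons; apply.
        by rewrite rcons_path Hq Hqb.
      by rewrite in_cons Hc orbT.
    by apply: (noloop acyc Hcv).
Qed.

End Core.

Section Fwd.
Variables (V X : finType) (A : rel V) (phi : X -> V) (t : V -> R).
Hypothesis acyc : acyclic A.
Hypothesis root : exists rho, forall v, connect A rho v.
Hypothesis RC2 : forall P P' Q Q', ret_cycle A P P' -> ret_cycle A Q Q' ->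
  (exists e, e \in path_arcs P ++ path_arcs P' /\ e \in path_arcs Q ++ path_arcs Q') ->
  (P = Q /\ P' = Q') \/ (P = Q' /\ P' = Q).
Hypothesis RC3 : forall v, (is_leaf A v \/ (is_tree_vertex A v /\ outdeg A v = 1)) ->
                  exists x, phi x = v.
Hypothesis TS : time_stamp A phi t.

Lemma ts_dec x p : path A x p -> p != [::] -> (forall y, y \in p -> ~ is_reticulation A y) ->
  (t (last x p) < t x)%R.
Proof.
case: TS => [_ [_ [TS2 _]]].
elim: p x => [//|y p IH] x /= /andP [Hxy Hp] _ Hr.
have Hy : (t y < t x)%R by apply: TS2 => //; apply: Hr; rewrite in_cons eqxx.
case: p IH Hp Hr => [//|z p] IH Hp Hr.
have := IH y Hp is_true_true; rewrite /=.
move=> H; apply: Rlt_trans (H _) Hy => w Hw; apply: Hr; by rewrite in_cons Hw orbT.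
Qed.

Lemma ts_noshort : NoShort A.
Proof.
move=> P Q u w H EP.
have [s [p [q [EP2 EQ2 _ Hq [Hp2 Hq2 Hu Hu' [El HPQ Hw]]]]]] := cyc_unfold H.
move: EP2; rewrite EP => [[Es Ep]]; subst s p.
case/lastP: q Hq EQ2 Hq2 Hu' El {Hw} => [//|q' w'] _ EQ2 Hq2 Hu' El.
rewrite /= last_rcons in El; subst w'.
have Hq' : q' != [::] by apply/negP => /eqP E; subst q'; apply: HPQ; rewrite EP EQ2.
move: Hq2; rewrite rcons_path => /andP [Hq2 Hyw].
have Hyu : last u q' != u by apply/eqP; apply: acyc.
have Huw : A u w by move: Hp2 => /= /andP [].
have Rw : is_reticulation A w by apply: ret_two Hyu Hyw Huw.
case: TS => [_ [_ [_ TS3]]].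
have E1 := TS3 _ _ Huw Rw; have E2 := TS3 _ _ Hyw Rw.
have Hlt : (t (last u q') < t u)%R.
  apply: ts_dec => // y Hy Ry.
  have [x Hx] := arcs_pred u Hy.
  have Hx' : (x, y) \in path_arcs P ++ path_arcs Q.
    by rewrite mem_cat EQ2 /path_arcs /= arcs_rcons mem_rcons in_cons Hx !orbT.
  have := ret_end acyc root RC2 H EP Hx' Ry; rewrite /= => E; subst y.
  by move: Hu'; rewrite EQ2 /= rcons_uniq Hy /= andbF.
lra.
Qed.

Lemma fwd_c u : cond_c A u.
Proof.
move=> v P P' _ _ H _; split; first exact: ts_noshort H.
exact: ts_noshort (ret_cycle_sym H).
Qed.

Lemma ts_child0 u v : t u = 0%R -> A u v -> is_reticulation A v /\ t v = 0%R.
Proof.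
case: TS => [T0 [_ [TS2 TS3]]] Hu Huv.
case Hr: (2 <= indeg A v).
  by split => //; rewrite -(TS3 _ _ Huv Hr).
have NR : ~ is_reticulation A v by rewrite /is_reticulation Hr.
have := TS2 _ _ Huv NR; have := T0 v; lra.
Qed.

Lemma fwd_a u : cond_a A phi u.
Proof.
move=> [x Hx]; have Hu : t u = 0%R by case: TS => [_ [T1 _]]; rewrite -Hx T1.
case E: (outdeg A u) => [|n]; first by left.
have [v Huv] : exists v, A u v by apply: out_pos; rewrite E.
have [Rv Tv] := ts_child0 Hu Huv.
right; exists v; split => //; split => //.
case E': (outdeg A v) => [//|m].
have [w Hvw] : exists w, A v w by apply: out_pos; rewrite E'.
have [Rw _] := ts_child0 Tv Hvw.
by case: (ret_ret acyc root RC2 ts_noshort Hvw Rv Rw).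
Qed.

Lemma fwd_b u : cond_b A u.
Proof.
move=> Ho [v [Huv [Rv Lv]]].
have Tv : t v = 0%R.
  have [x Hx] := RC3 (or_introl Lv); case: TS => [_ [T1 _]]; by rewrite -Hx T1.
have Tu : t u = 0%R by case: TS => [_ [_ [_ TS3]]]; rewrite (TS3 _ _ Huv Rv).
have [w [Hwv Huw]] := two_out Ho Huv.
have [Rw _] := ts_child0 Tu Huw.
case Ru: (2 <= indeg A u).
  exact: (ret_ret acyc root RC2 ts_noshort Huv Ru Rv).
have NR : ~ is_reticulation A u by rewrite /is_reticulation Ru.
have := tree_one acyc root RC2 ts_noshort NR Huv Huw Rv Rw.
by move=> E; move: Hwv; rewrite E eqxx.
Qed.

End Fwd.

Section Bwd.
Variables (V : finType) (A : rel V).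
Hypothesis acyc : acyclic A.
Hypothesis root : exists rho, forall v, connect A rho v.
Hypothesis RC1 : forall v, indeg A v <= 2.
Hypothesis RC2 : forall P P' Q Q', ret_cycle A P P' -> ret_cycle A Q Q' ->
  (exists e, e \in path_arcs P ++ path_arcs P' /\ e \in path_arcs Q ++ path_arcs Q') ->
  (P = Q /\ P' = Q') \/ (P = Q' /\ P' = Q).
Hypothesis NS : NoShort A.

Lemma conn_ind (e : rel V) (Pr : V -> Prop) x y : connect e x y -> Pr x ->
  (forall a b, Pr a -> e a b -> Pr b) -> Pr y.
Proof.
move=> /connectP [p Hp ->] Hx Hs; elim: p x Hp Hx => [//|z p IH] x /= /andP [H1 H2] Hx.
exact: IH H2 (Hs _ _ Hx H1).
Qed.

Lemma path_nohead x xs : path A x xs -> x \in xs -> False.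
Proof.
move=> Hp Hx; have [p1 [p2 [E _]]] := split_last Hx; subst xs.
move: Hp; rewrite cat_path => /andP [H1 /= /andP [H2 _]].
have Hc : connect A x (last x p1) by apply/connectP; exists p1.
by apply: (noloop acyc Hc).
Qed.

Lemma path_suffix x xs u1 u w : path A x xs -> x :: xs = u1 ++ u :: w -> path A u w.
Proof.
move=> Hp; case: u1 => [|y u1] /= [E1 E2]; subst; first done.
by move: Hp; rewrite cat_path => /andP [_ /= /andP [_ ->]].
Qed.

Lemma last_suffix (x : V) xs u1 u w : x :: xs = u1 ++ u :: w -> last u w = last x xs.
Proof.
move=> E; rewrite -(last_cons x x xs) E last_cat /=; done.
Qed.

Definition retb v := 2 <= indeg A v.
Definition E x y := (x == y) || [exists v, [&& retb v, (x == v) || A x v & (y == v) || A y v]].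
Definition W x y := [exists x1, [exists z1, [&& E x x1, A x1 z1, ~~ retb z1 & E z1 y]]].
Definition NTb y := [exists v, retb v && ((y == v) || A y v)].

Lemma Wp x y : W x y <-> exists x1 z1, [/\ E x x1, A x1 z1, ~~ retb z1 & E z1 y].
Proof.
split.
  by case/existsP => x1 /existsP [z1 /and4P [H1 H2 H3 H4]]; exists x1, z1.
move=> [x1 [z1 [H1 H2 H3 H4]]]; apply/existsP; exists x1; apply/existsP; exists z1.
by apply/and4P.
Qed.

Lemma E_refl x : E x x.
Proof. by rewrite /E eqxx. Qed.

Lemma E_sym x y : E x y = E y x.
Proof.
rewrite /E eq_sym; congr (_ || _); apply/existsP/existsP => [] [v /and3P [H1 H2 H3]];
by exists v; rewrite H1 H2 H3.
Qed.

Lemma E_trans x y z : E x y -> E y z -> E x z.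
Proof.
rewrite /E => /orP [/eqP ->//|/existsP [v1 /and3P [R1 Hx1 Hy1]]].
move=> /orP [/eqP <-|/existsP [v2 /and3P [R2 Hy2 Hz2]]].
  by apply/orP; right; apply/existsP; exists v1; rewrite R1 Hx1 Hy1.
have Ev : v1 = v2.
  case/orP: Hy1 => [/eqP Ey1|Ay1]; case/orP: Hy2 => [/eqP Ey2|Ay2].
  - by rewrite -Ey1 -Ey2.
  - by subst y; case: (ret_ret acyc root RC2 NS Ay2 R1 R2).
  - by subst y; case: (ret_ret acyc root RC2 NS Ay1 R2 R1).
  - have Ry : ~ is_reticulation A y by move=> Ry; exact: (ret_ret acyc root RC2 NS Ay1 Ry R1).
    by apply: (tree_one acyc root RC2 NS Ry Ay1 Ay2 R1 R2).
subst v2; apply/orP; right.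
by apply/existsP; exists v1; rewrite R1 Hx1 Hz2.
Qed.

Lemma memK x v : E x v -> retb v -> x = v \/ A x v.
Proof.
rewrite /E => /orP [/eqP ->|/existsP [v1 /and3P [R1 Hx1 Hv1]]] Rv; first by left.
case/orP: Hv1 => [/eqP E1|Av1]; last by case: (ret_ret acyc root RC2 NS Av1 Rv R1).
subst v1; case/orP: Hx1 => [/eqP ->|H]; [by left|by right].
Qed.

Lemma triv_E x y : ~~ NTb x -> E x y -> y = x.
Proof.
move=> Hn; rewrite /E => /orP [/eqP ->//|/existsP [v /and3P [R Hx _]]].
by case/negP: Hn; apply/existsP; exists v; rewrite R Hx.
Qed.


Definition Canon v s p q : Prop :=
  let C := path_arcs (s :: p) ++ path_arcs (s :: q) in
  [/\ ret_cycle A (s :: p) (s :: q), last s p = v,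
   (forall x, (x = v) \/ A x v -> exists r, [/\ r != [::], path A s r, last s r = x &
       forall e, e \in zip (s :: r) r -> e \in C]),
   (forall x, A x v -> (x \in s :: p) || (x \in s :: q)) &
   [/\ (forall x c, A x v -> (x, c) \in C -> c = v) & (forall c, (v, c) \notin C)]].

Lemma canon' v : retb v -> exists s p q, Canon v s p q.
Proof. move=> H; have := canon acyc root NS RC1 H; done. Qed.

Definition Fine s (C : seq (V * V)) v y := exists a r2,
  [/\ a != [::], path A s a, (forall e, e \in zip (s :: a) a -> e \in C),
      (last s a = v \/ A (last s a) v) &
      [/\ r2 != [::], path A (last s a) r2 & last (last s a) r2 = y]].

Section FineSec.
Variables (v s : V) (p q : seq V).
Hypothesis Rv : retb v.
Hypothesis HCv : Canon v s p q.
Notation C := (path_arcs (s :: p) ++ path_arcs (s :: q)).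

Lemma fine_ext y z : Fine s C v y -> A y z -> Fine s C v z.
Proof.
move=> [a [r2 [H1 H2 H3 H4 [H5 H6 H7]]]] Hyz; exists a, (rcons r2 z); split => //; split.
- by case: (r2).
- by rewrite rcons_path H6 H7 Hyz.
- by rewrite last_rcons.
Qed.

Lemma fine_start x z : (x = v \/ A x v) -> A x z -> Fine s C v z.
Proof.
move=> Hx Hxz; case: HCv => [_ _ Hw _ _].
have [r [H1 H2 H3 H4]] := Hw x Hx.
exists r, [:: z]; split => //; rewrite H3 //; split => //=; by rewrite Hxz.
Qed.


Lemma fine_return z1 : Fine s C v z1 -> A z1 v -> ~~ retb z1 -> False.
Proof.
move=> [a [r2 [Ha Hpa HaC Hm [Hr2 Hpr Hl]]]] Hz1 Nz1.
case: HCv => [HC Ep Hw Hon [H3 H4]].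
have Hpath : path A s (a ++ r2) by rewrite cat_path Hpa Hpr.
have Hlast : last s (a ++ r2) = z1 by rewrite last_cat.
have Hv : last s p \notin s :: (a ++ r2).
  rewrite Ep; apply/negP => Hin; have := suffix_connect Hpath Hin; rewrite Hlast => Hc.
  by apply: (noloop acyc Hc).
have Hs : s \notin a ++ r2 by apply/negP => H; exact: path_nohead Hpath H.
have Hon' : (last s (a ++ r2) \in s :: p) || (last s (a ++ r2) \in s :: q).
  by rewrite Hlast; apply: Hon.
have [_ Harcs] := walk_in acyc root RC2 HC (erefl _) (erefl _) Hpath Hon' Hv Hs.
case: r2 Hr2 Hpr Hl Harcs {Hpath Hlast Hv Hs Hon'} => [//|b1 r2'] _ Hpr Hl Harcs.
have Hm1 : (last s a, b1) \in C by apply: Harcs; rewrite arcs_cat mem_cat /= in_cons eqxx orbT.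
case: Hm => Hm.
  by move: (H4 b1); rewrite -Hm Hm1.
have Eb1 := H3 _ _ Hm Hm1; subst b1.
case: r2' Hpr Hl Harcs => [|b2 r2''] Hpr Hl Harcs.
  by rewrite /= in Hl; subst z1; rewrite Rv in Nz1.
have : (v, b2) \in C by apply: Harcs; rewrite arcs_cat mem_cat /= !in_cons eqxx !orbT.
by rewrite (negbTE (H4 b2)).
Qed.

Lemma fine_closure y' v2 : Fine s C v y' -> A y' v2 -> retb v2 -> ~~ A y' v ->
  forall z, z = v2 \/ A z v2 -> Fine s C v z.
Proof.
move=> [a [r2 [Ha Hpa HaC Hm [Hr2 Hpr Hl]]]] Hy' R2 Nyv z Hz.
have [s2 [p2 [q2 HC2]]] := canon' R2.
case: HC2 => [HCc2 Ep2 Hw2 Hon2 [H32 H42]].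
have [r [Hr Hpr2 Hlr _]] := Hw2 z Hz.
case Hin: (s2 \in last s a :: r2).
  have [u1 [u2 [Eu _]]] := split_last Hin.
  exists a; case: u1 Eu => [|w u1] /= Eu.
    case: Eu => Em Er2; exists r; split => //; split => //; by rewrite Em.
  case: Eu => Ew Er2; exists (u1 ++ s2 :: r); split => //; split.
  - by case: (u1).
  - move: Hpr; rewrite Er2 !cat_path /= => /andP [-> /andP [-> _]]; by rewrite Hpr2.
  - by rewrite last_cat /= Hlr.
exfalso.
have Hpath : path A s (a ++ r2) by rewrite cat_path Hpa Hpr.
have Hlast : last s (a ++ r2) = y' by rewrite last_cat.
have Hr2s : s2 \notin r2 by move: Hin; rewrite in_cons => /norP [].
have [u1 [u [u2 [Eu Hu2 Hs2u]]]] : exists u1 u u2, [/\ s :: a = u1 ++ u :: u2, u2 != [::] & s2 \notin u2].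
  case Hin2: (s2 \in s :: a).
    have [u1 [u2 [Eu Hn]]] := split_last Hin2.
    exists u1, s2, u2; split => //.
    apply/negP => /eqP E2; subst u2.
    have := last_suffix Eu; rewrite /= => E3.
    by move: Hin; rewrite E3 in_cons eqxx.
  exists [::], s, a; split => //.
  by move: Hin2; rewrite in_cons => /norP [].
have Eu' : s :: (a ++ r2) = u1 ++ u :: (u2 ++ r2).
  by have -> : s :: (a ++ r2) = (s :: a) ++ r2 by []; rewrite Eu -catA.
have Hpu := path_suffix Hpath Eu'.
have Hlu : last u (u2 ++ r2) = y' by rewrite (last_suffix Eu') Hlast.
have Hs2 : s2 \notin u2 ++ r2 by rewrite mem_cat negb_or Hs2u Hr2s.
have Hv2 : last s2 p2 \notin u :: (u2 ++ r2).
  rewrite Ep2; apply/negP => Hin3; have := suffix_connect Hpu Hin3; rewrite Hlu => Hc.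
  by apply: (noloop acyc Hc).
have Hon' : (last u (u2 ++ r2) \in s2 :: p2) || (last u (u2 ++ r2) \in s2 :: q2).
  by rewrite Hlu; apply: Hon2.
have [_ Harcs] := walk_in acyc root RC2 HCc2 (erefl _) (erefl _) Hpu Hon' Hv2 Hs2.
case: u2 Eu Hu2 Hs2u Eu' Hpu Hlu Hs2 Hv2 Hon' Harcs => [//|b u2'] Eu _ _ _ _ _ _ _ _ Harcs.
have He2 : (u, b) \in path_arcs (s2 :: p2) ++ path_arcs (s2 :: q2).
  by apply: Harcs; rewrite /= in_cons eqxx.
have He1 : (u, b) \in C.
  apply: HaC; have := @arcs_sub_suffix _ u1 u (b :: u2') (u, b).
  by rewrite -Eu /= in_cons eqxx => /(_ is_true_true).
case: HCv => [HC Ep _ _ _].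
have := sameEnd RC2 HC HCc2 He1 He2 (erefl _) (erefl _); rewrite Ep Ep2 => Ev.
by move: Nyv; rewrite Ev Hy'.
Qed.


Definition Inv y := ~~ E y v /\ forall z, E y z -> Fine s C v z.

Lemma E_of_K x : x = v \/ A x v -> E x v.
Proof.
move=> Hx; apply/orP; right; apply/existsP; exists v; rewrite Rv eqxx /= andbT.
by case: Hx => [->|->]; rewrite ?eqxx ?orbT.
Qed.

Lemma inv_step x1 z1 y2 : (Fine s C v x1 \/ (x1 = v \/ A x1 v)) -> A x1 z1 -> ~~ retb z1 ->
  E z1 y2 -> Inv y2.
Proof.
move=> Hx1 Hxz Nz1 Hzy.
have Fz1 : Fine s C v z1.
  by case: Hx1 => [F|K]; [exact: fine_ext F Hxz | exact: fine_start K Hxz].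
have Nz1v : ~~ A z1 v by apply/negP => H; exact: fine_return Fz1 H Nz1.
split.
  apply/negP => Hyv; case: (memK (E_trans Hzy Hyv) Rv) => [Ez|Az].
    by subst z1; rewrite Rv in Nz1.
  by rewrite Az in Nz1v.
move=> z Hyz; move: (E_trans Hzy Hyz); rewrite /E => /orP [/eqP <-//|/existsP [v2 /and3P [R2 H1 H2]]].
case/orP: H1 => [/eqP E1|A1]; first by subst z1; rewrite R2 in Nz1.
apply: (fine_closure Fz1 A1 R2 Nz1v).
by case/orP: H2 => [/eqP ->|->]; [left|right].
Qed.

Lemma inv_W y y2 : Inv y -> W y y2 -> Inv y2.
Proof.
move=> [_ HF] /Wp [x1 [z1 [H1 H2 H3 H4]]]; apply: (inv_step _ H2 H3 H4).
by left; apply: HF.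
Qed.

Lemma noCycleK x0 y : (x0 = v \/ A x0 v) -> W x0 y -> connect W y x0 -> False.
Proof.
move=> Hx0 /Wp [x1 [z1 [H1 H2 H3 H4]]] Hc.
have Hx1 : x1 = v \/ A x1 v.
  apply: memK => //; apply: E_trans (E_of_K Hx0); by rewrite E_sym.
have I0 := inv_step (or_intror Hx1) H2 H3 H4.
have := conn_ind Hc I0 inv_W; move=> [N _].
by rewrite (E_of_K Hx0) in N.
Qed.

End FineSec.

Definition plusA x y := exists z, A x z /\ connect A z y.

Lemma triv_core y y2 : ~~ NTb y -> W y y2 -> exists z1, A y z1 /\ ((~~ NTb y2 /\ y2 = z1) \/ NTb y2).
Proof.
move=> Ny /Wp [x1 [z1 [H1 H2 H3 H4]]]; have Ex := triv_E Ny H1; subst x1.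
exists z1; split => //; case N2: (NTb y2); [by right | left; split => //].
by apply/esym; apply: triv_E; rewrite ?N2 // E_sym.
Qed.

Lemma nocycle x y : W x y -> connect W y x -> False.
Proof.
move=> Hxy Hyx; case Nx: (NTb x).
  case/existsP: Nx => v /andP [Rv Hx].
  have [s [p [q HC]]] := canon' Rv.
  apply: (noCycleK Rv HC _ Hxy Hyx); by case/orP: Hx => [/eqP ->|->]; [left|right].
pose Qi y := connect W x y /\ ((plusA x y /\ ~~ NTb y) \/ exists w, [/\ NTb w, connect W x w & connect W w y]).
have Q1 : Qi y.
  split; first exact: connect1.
  have [z1 [Hz1 [[N2 E2]|N2]]] := triv_core (negbT Nx) Hxy.
    by left; subst z1; split => //; exists y; split => //; exact: connect0.
  by right; exists y; split; [done | exact: connect1 | exact: connect0].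
have Qs : forall a b, Qi a -> W a b -> Qi b.
  move=> a b [Hxa Ha] Hab; split; first exact: connect_trans Hxa (connect1 Hab).
  case: Ha => [[[z [Hxz Hza]] Na]|[w [Nw Hxw Hwa]]].
    have [z1 [Hz1 [[N2 E2]|N2]]] := triv_core Na Hab.
      left; subst z1; split => //; exists z; split => //; exact: connect_trans Hza (connect1 Hz1).
    by right; exists b; split; [done | exact: connect_trans Hxa (connect1 Hab) | exact: connect0].
  by right; exists w; split => //; exact: connect_trans Hwa (connect1 Hab).
have [_ [[[z [Hxz Hzx]] _]|[w [Nw Hxw Hwx]]]] := conn_ind Hyx Q1 Qs.
  by apply: (noloop acyc Hzx).
have Hwx' : w != x by apply/negP => /eqP E1; subst w; rewrite Nw in Nx.
case/connectP: Hwx => [[|w1 pw] /= Hp Ew]; first by rewrite Ew eqxx in Hwx'.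
case/andP: Hp => Hww1 Hp.
case/existsP: Nw => v /andP [Rv Hw].
have [s [p [q HC]]] := canon' Rv.
apply: (noCycleK Rv HC _ Hww1); first by case/orP: Hw => [/eqP ->|->]; [left|right].
apply: connect_trans Hxw; apply/connectP; by exists pw.
Qed.


End Bwd.

Section Final.
Variables (V X : finType) (A : rel V) (phi : X -> V).
Hypothesis acyc : acyclic A.
Hypothesis root : exists rho, forall v, connect A rho v.
Hypothesis RC1 : forall v, indeg A v <= 2.
Hypothesis RC2 : forall P P' Q Q', ret_cycle A P P' -> ret_cycle A Q Q' ->
  (exists e, e \in path_arcs P ++ path_arcs P' /\ e \in path_arcs Q ++ path_arcs Q') ->
  (P = Q /\ P' = Q') \/ (P = Q' /\ P' = Q).
Hypothesis Hc : forall u, [/\ cond_a A phi u, cond_b A u & cond_c A u].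

Lemma short_ret P Q u w : ret_cycle A P Q -> P = [:: u; w] -> A u w /\ is_reticulation A w.
Proof.
move=> H EP.
have [s [p [q [EP2 EQ2 _ Hq [Hp2 Hq2 Hu Hu' [El HPQ Hw]]]]]] := cyc_unfold H.
move: EP2; rewrite EP => [[Es Ep]]; subst s p.
case/lastP: q Hq EQ2 Hq2 Hu' El {Hw} => [//|q' w'] _ EQ2 Hq2 Hu' El.
rewrite /= last_rcons in El; subst w'.
have Hq' : q' != [::] by apply/negP => /eqP E; subst q'; apply: HPQ; rewrite EP EQ2.
move: Hq2; rewrite rcons_path => /andP [Hq2 Hyw].
have Hyu : last u q' != u by apply/eqP; apply: acyc.
have Huw : A u w by move: Hp2 => /= /andP [].
split => //; exact: ret_two Hyu Hyw Huw.
Qed.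

Lemma c_noshort : NoShort A.
Proof.
move=> P Q u w H EP; have [Huw Rw] := short_ret H EP.
have [_ _ Hcc] := Hc u.
have := Hcc w P Q Huw Rw H; rewrite EP in_cons mem_seq1 eqxx orbT => /(_ (or_introl is_true_true)).
by case.
Qed.

Let NS := c_noshort.

Definition plusW x y := [exists z, W A x z && connect (W A) z y].
Definition tt x := INR #|[set y | plusW x y]|.

Lemma noW_phi u : (exists x, phi x = u) -> forall y, ~~ W A u y.
Proof.
move=> Hex y; have [Ha Hb _] := Hc u.
apply/negP => /Wp [x1 [z1 [H1 H2 H3 H4]]].
have Hz1 : forall v, is_reticulation A v -> z1 != v.
  by move=> v Rv; apply/negP => /eqP E; subst z1; rewrite /retb Rv in H3.
case: (Ha Hex) => [Lu|[v0 [Huv0 [R0 L0]]]].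
  move: H1; rewrite /E => /orP [/eqP Ex1|/existsP [v /and3P [Rv Hu Hx1]]].
    by subst x1; apply: (leaf_no Lu H2).
  case/orP: Hu => [/eqP Eu|Auv]; last by apply: (leaf_no Lu Auv).
  subst v; case/orP: Hx1 => [/eqP Ex|Ax1].
    by subst x1; apply: (leaf_no Lu H2).
  have [_ Hb1 _] := Hc x1.
  apply: (Hb1 (out_two (Hz1 u Rv) H2 Ax1)); by exists u.
move: H1; rewrite /E => /orP [/eqP Ex1|/existsP [v /and3P [Rv Hu Hx1]]].
  subst x1; apply: (Hb (out_two (Hz1 v0 R0) H2 Huv0)); by exists v0.
have Nu : ~ is_reticulation A u by move=> Ru; exact: (ret_ret acyc root RC2 NS Huv0 Ru R0).
case/orP: Hu => [/eqP Eu|Auv].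
  by subst v; apply: Nu.
have Ev := tree_one acyc root RC2 NS Nu Auv Huv0 Rv R0; subst v.
case/orP: Hx1 => [/eqP Ex|Ax1].
  by subst x1; apply: (leaf_no L0 H2).
have [_ Hb1 _] := Hc x1.
apply: (Hb1 (out_two (Hz1 v0 R0) H2 Ax1)); by exists v0.
Qed.

Lemma bwd_ts : time_stamp A phi tt.
Proof.
split; first by move=> v; apply: pos_INR.
split.
  move=> x; rewrite /tt.
  have -> : [set y | plusW (phi x) y] = set0.
    apply/setP => y; rewrite !inE /plusW; apply/negbTE/negP => /existsP [z /andP [Hz _]].
    by move: Hz; apply/negP; apply: noW_phi; exists x.
  by rewrite cards0.
split.
  move=> u v Huv Nv; rewrite /tt; apply: lt_INR; apply/ltP.
  have Wuv : W A u v.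
    apply/Wp; exists u, v; split => //; rewrite ?E_refl //.
    by apply/negP.
  apply: proper_card; apply/properP; split.
    apply/subsetP => w; rewrite !inE => /existsP [z /andP [Hz Hzw]].
    apply/existsP; exists v; rewrite Wuv /=.
    exact: connect_trans (connect1 Hz) Hzw.
  exists v; rewrite !inE.
    by apply/existsP; exists v; rewrite Wuv connect0.
  apply/negP => /existsP [z /andP [Hz Hzv]].
  by apply: (nocycle acyc root RC1 RC2 NS Hz).
move=> u v Huv Rv; rewrite /tt.
have Euv : E A u v.
  apply/orP; right; apply/existsP; exists v; rewrite /retb Rv eqxx Huv /=.
  by rewrite orbT.
have HW : forall z, W A u z = W A v z.
  have Evu : E A v u by rewrite E_sym.
  move=> z; apply/idP/idP => /Wp [x1 [z1 [H1 H2 H3 H4]]]; apply/Wp; exists x1, z1; split => //.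
    by apply: (E_trans acyc root RC2 NS Evu H1).
  by apply: (E_trans acyc root RC2 NS Euv H1).
congr INR; apply: eq_card => w; rewrite !inE /plusW.
apply/existsP/existsP => [] [z Hz]; exists z; by rewrite ?HW // -HW.
Qed.

End Final.

Unset Implicit Arguments.

Theorem mainTheorem1 (V X : finType) (A : rel V) (phi : X -> V) :
  rooted_cactus A phi ->
  (temporal A phi <->
   forall u : V, [/\ cond_a A phi u, cond_b A u & cond_c A u]).
Proof.
case=> _ [acyc [rho [_ Hrho]]] RC1 RC2 RC3.
have root : exists rho, forall v, connect A rho v by exists rho.
split.
  move=> [t TS] u; split.
  - by apply: (fwd_a acyc root RC2 TS).
  - by apply: (fwd_b acyc root RC2 RC3 TS).
  - by apply: (fwd_c acyc root RC2 TS).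
move=> H; exists (tt A); by apply: (bwd_ts acyc root RC1 RC2 H).
Qed.
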